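(* For every digraph $D$, the inverse limit $\varprojlim(D/P)_{P\in\mathcal{P}(D)}$ is a compact Hausdorff space, the map $\Phi\colon D\to\varprojlim(D/P)_{P\in\mathcal{P}(D)}$, $x\mapsto(\varphi_P(x))_{P\in\mathcal{P}(D)}$, is an embedding (a homeomorphism onto its image), and $\Phi(D)$ is dense in $\varprojlim(D/P)_{P\in\mathcal{P}(D)}$. In particular the inverse limit is a Hausdorff compactification of $D$.
   Context: Digraphs have no loops and no parallel edges. $D$ is regarded as a topological space with the 1-complex topology: each edge is a copy of $[0,1]$ glued at its endvertices; basic open sets are open stars of radius $\varepsilon$ around vertices and open subintervals of edges. A vertex set $Y$ separates vertex sets $A,B$ if every $A$–$B$ path meets $Y$ or every $B$–$A$ path meets $Y$. A finite partition $P$ of $V(D)$ is admissible if any two distinct classes of $P$ are separated by some finite vertex set; $\mathcal{P}(D)$ is the set of admissible partitions, directed by $P\le P'$ iff every class of $P'$ is contained in a class of $P$. For $P\in\mathcal{P}(D)$, $D/P$ is the finite multi-digraph with vertex set $P$ where, for distinct $p_1,p_2\in P$: if $D$ has finitely many edges from $p_1$ to $p_2$, there is one edge $(e,p_1,p_2)$ for each such edge $e$ of $D$; if infinitely many, there is a single quotient edge $(p_1p_2,p_1,p_2)$. $D/P$ carries the 1-complex topology. For $P\le P'$ the bonding map $f_{P'P}\colon D/P'\to D/P$ sends a vertex $p'$ to the class $p\supseteq p'$; an edge $(e',p_1',p_2')$ with $p_1',p_2'$ in the same class $p$ is mapped entirely to $p$; otherwise, with $p_1'\subseteq p_1$, $p_2'\subseteq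 p_2$, $p_1\ne p_2$, it is mapped pointwise (corresponding points) onto the quotient edge from $p_1$ to $p_2$ if $D/P$ has one, and otherwise onto the edge $(e',p_1,p_2)$ of $D/P$. The inverse limit $\varprojlim(D/P)_{P\in\mathcal{P}(D)}$ is the subspace of $\prod_P D/P$ of all $(x_P)_P$ with $f_{P'P}(x_{P'})=x_P$ for all $P\le P'$. $\varphi_P\colon D\to D/P$: a vertex $v$ goes to the class containing $v$; an inner point $z$ of an edge $vw$ goes to the class containing $v,w$ if they lie in the same class, and otherwise to the corresponding point on the edge of $D/P$ from the class of $v$ to the class of $w$ (the copy of $vw$, or the quotient edge). *)

(* Defs.v *)
From HB Require Import structures.
From mathcomp Require Import all_boot all_order all_algebra all_classical all_reals all_analysis.
From mathcomp Require Import Rstruct Rstruct_topology.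

Set Implicit Arguments.
Unset Strict Implicit.
Unset Printing Implicit Defensive.
Import Order.TTheory GRing.Theory Num.Theory.
Local Open Scope classical_set_scope.
Local Open Scope ring_scope.

(** * Digraphs: no loops; no parallel edges (edges = ordered pairs). *)
Record digraph := Digraph {
  dvert : Type;
  dedge : dvert -> dvert -> Prop;
  dedge_irr : forall v, ~ dedge v v }.

Record cplx := Cplx {
  cV : Type;
  cE : Type;
  csrc : cE -> cV;
  ctgt : cE -> cV }.

(** Points of the 1-complex: vertices, and inner points [t] (0 < t < 1) of
    edges; the edge [e] is the copy of [0,1] with 0 glued to [csrc e] and
    1 glued to [ctgt e]. *)
Inductive cpoint (C : cplx) : Type :=
  | CV of cV C
  | CE (e : cE C) (t : Rdefinitions.R) of (0 < t < 1).

HB.instance Definition _ (C : cplx) := gen_eqMixin (cpoint C).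
HB.instance Definition _ (C : cplx) := gen_choiceMixin (cpoint C).

Definition open_star (C : cplx) (x : cV C) (eps : Rdefinitions.R) : set (cpoint C) :=
  fun z => match z with
           | CV y => y = x
           | CE e t _ => (csrc e = x /\ t < eps) \/ (ctgt e = x /\ 1 - eps < t)
           end.

Definition edge_interval (C : cplx) (e : cE C) (a b : Rdefinitions.R) : set (cpoint C) :=
  fun z => match z with
           | CV _ => False
           | CE e' t _ => e' = e /\ a < t < b
           end.

Definition cbasic (C : cplx) : set (set (cpoint C)) :=
  fun U => (exists x eps, 0 < eps < 1 /\ U = open_star x eps)
        \/ (exists e a b, 0 <= a /\ a < b /\ b <= 1 /\ U = edge_interval e a b).

HB.instance Definition _ (C : cplx) :=
  isSubBaseTopological.Build (cpoint C) (@cbasic C) id.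

Definition dedges (D : digraph) := {uv : dvert D * dvert D | dedge uv.1 uv.2}.
Definition dcplx (D : digraph) : cplx :=
  @Cplx (dvert D) (dedges D) (fun e => (sval e).1) (fun e => (sval e).2).
Definition dspace (D : digraph) := cpoint (dcplx D).

Fixpoint is_walk (D : digraph) (x : dvert D) (s : list (dvert D)) : Prop :=
  match s with
  | nil => True
  | cons y s' => dedge x y /\ is_walk y s'
  end.

Fixpoint walk_meets (D : digraph) (Y : set (dvert D)) (s : list (dvert D)) : Prop :=
  match s with
  | nil => False
  | cons y s' => Y y \/ walk_meets Y s'
  end.

Definition all_paths_meet (D : digraph) (Y A B : set (dvert D)) : Prop :=
  forall (a : dvert D) (s : list (dvert D)),
    A a -> is_walk a s -> B (last a s) -> walk_meets Y (cons a s).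

Definition separates (D : digraph) (Y A B : set (dvert D)) : Prop :=
  all_paths_meet Y A B \/ all_paths_meet Y B A.

Definition finite_partition (D : digraph) (P : set (set (dvert D))) : Prop :=
  [/\ finite_set P,
      (forall p, P p -> p !=set0),
      (forall p q, P p -> P q -> p `&` q !=set0 -> p = q)
    & (forall v, exists2 p, P p & p v)].

Definition admissible (D : digraph) (P : set (set (dvert D))) : Prop :=
  finite_partition P /\
  forall p q, P p -> P q -> p <> q ->
    exists Y : set (dvert D), finite_set Y /\ separates Y p q.

Definition adm_part (D : digraph) := {P : set (set (dvert D)) | admissible P}.

Definition part_le (D : digraph) (P P' : adm_part D) : Prop :=
  forall p', sval P' p' -> exists2 p, sval P p & p' `<=` p.

Section Quotient.
Variables (D : digraph) (P : adm_part D).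

Definition qvert := {p : set (dvert D) | sval P p}.

(** the class of P containing v *)
Definition cls (v : dvert D) : qvert :=
  let h := match proj2_sig P with conj hp _ =>
             match hp with And4 _ _ _ hc => hc v end end in
  let w := cid2 h in exist _ (sval w) (s2valP w).

Definition edges_between (p1 p2 : set (dvert D)) : set (dvert D * dvert D) :=
  [set uv | dedge uv.1 uv.2 /\ p1 uv.1 /\ p2 uv.2].

(** raw edge labels of D/P: copies of D-edges, and quotient edges *)
Inductive qlabel :=
  | QCopy (u v : dvert D)
  | QQuot (p1 p2 : set (dvert D)).

Definition qvalid (l : qlabel) : Prop :=
  match l with
  | QCopy u v => [/\ dedge u v, sval (cls u) <> sval (cls v)
                   & finite_set (edges_between (sval (cls u)) (sval (cls v)))]
  | QQuot p1 p2 => [/\ sval P p1, sval P p2, p1 <> p2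
                   & ~ finite_set (edges_between p1 p2)]
  end.

Definition qedge := {l : qlabel | qvalid l}.

Definition qsrc (l : qedge) : qvert :=
  match l with
  | exist l0 h =>
    (match l0 return qvalid l0 -> qvert with
     | QCopy u v => fun _ => cls u
     | QQuot p1 p2 => fun h => exist _ p1 (match h with And4 h1 _ _ _ => h1 end)
     end) h
  end.

Definition qtgt (l : qedge) : qvert :=
  match l with
  | exist l0 h =>
    (match l0 return qvalid l0 -> qvert with
     | QCopy u v => fun _ => cls v
     | QQuot p1 p2 => fun h => exist _ p2 (match h with And4 _ h2 _ _ => h2 end)
     end) h
  end.

Definition qcplx : cplx := @Cplx qvert qedge qsrc qtgt.

End Quotient.

Definition qspace (D : digraph) (P : adm_part D) := cpoint (qcplx P).

Section Bonding.
Variables (D : digraph) (P P' : adm_part D) (hle : part_le P P').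

(** the class of P containing the class p' of P' *)
Definition up (p' : qvert P') : qvert P :=
  let w := cid2 (hle (proj2_sig p')) in exist _ (sval w) (s2valP w).

Definition bond (z : qspace P') : qspace P :=
  match z with
  | CV p' => @CV (qcplx P) (up p')
  | CE l' t ht =>
    let q1 := up (qsrc l') in
    let q2 := up (qtgt l') in
    match pselect (q1 = q2) with
    | left _ => @CV (qcplx P) q1
    | right _ =>
      match pselect (qvalid P (QQuot (sval q1) (sval q2))) with
      | left hq => @CE (qcplx P) (exist _ _ hq) t ht
      | right _ =>
        match sval l' with
        | QCopy u v =>
          match pselect (qvalid P (QCopy u v)) with
          | left hc => @CE (qcplx P) (exist _ _ hc) t ht
          | right _ => @CV (qcplx P) q1 (* unreachable *)
          end
        | QQuot _ _ => @CV (qcplx P) q1 (* unreachable *)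
        end
      end
    end
  end.

End Bonding.

Definition phi (D : digraph) (P : adm_part D) (z : dspace D) : qspace P :=
  match z with
  | CV v => @CV (qcplx P) (cls P v)
  | CE e t ht =>
    let u := (sval e).1 in
    let v := (sval e).2 in
    match pselect (cls P u = cls P v) with
    | left _ => @CV (qcplx P) (cls P u)
    | right _ =>
      match pselect (qvalid P (QCopy u v)) with
      | left hc => @CE (qcplx P) (exist _ _ hc) t ht
      | right _ =>
        match pselect (qvalid P (QQuot (sval (cls P u)) (sval (cls P v)))) with
        | left hq => @CE (qcplx P) (exist _ _ hq) t ht
        | right _ => @CV (qcplx P) (cls P u) (* unreachable *)
        end
      end
    end
  end.

Definition qprod (D : digraph) := prod_topology (@qspace D).

Definition invlim (D : digraph) : set (qprod D) :=
  [set x | forall (P P' : adm_part D) (h : part_le P P'), bond h (x P') = x P].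

Definition Phi (D : digraph) (z : dspace D) : qprod D := fun P => phi P z.

Arguments invlim : clear implicits.
Arguments Phi : clear implicits.

(* Main.v *)
Require Import Defs.
From HB Require Import structures.
From mathcomp Require Import all_boot all_order all_algebra all_classical all_reals all_analysis.
From mathcomp Require Import Rstruct Rstruct_topology.
From mathcomp Require Import finmap.
From mathcomp Require Import lra.
Set Implicit Arguments.
Unset Strict Implicit.
Unset Printing Implicit Defensive.
Import Order.TTheory GRing.Theory Num.Theory.
Local Open Scope classical_set_scope.
Local Open Scope ring_scope.
Local Notation cpoint := Defs.cpoint.

Section A.
Variable C : cplx.

Lemma cnbhs_sub (p : cpoint C) (F : set_system (cpoint C)) :
  Filter F -> (forall B, cbasic B -> B p -> F B) -> nbhs p `<=` F.
Proof.
move=> FF H U.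
case=> ? [[I Irp] <-] [?] /[dup] /(Irp _) [G Gsub <-] IG Gp sU.
move: IG Gp; set K := \bigcap_(i in _) _ => IG Gp.
apply: (@filterS _ F FF K).
  by move=> y Hy; apply: sU; exists K.
rewrite /K; apply: (@filter_bigI _ _ G _ _ FF) => B GB.
apply: H; first by have /set_mem := Gsub _ GB.
by apply: Gp.
Qed.

Lemma cbasic_open (B : set (cpoint C)) : cbasic B -> open B.
Proof.
move=> HB; exists [set B]; last by rewrite bigcup_set1.
move=> A ->; exists [fset B]%fset; last by rewrite set_fset1 bigcap_set1.
by move=> x /fset1P ->; apply: mem_set.
Qed.

Lemma cont_basic (T : topologicalType) (f : T -> cpoint C) :
  (forall x B, cbasic B -> B (f x) -> nbhs x (f @^-1` B)) -> continuous f.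
Proof.
move=> H x; apply: cnbhs_sub => B cB Bfx; exact: H.
Qed.

Definition csep (x y : cpoint C) := exists U V, [/\ cbasic U, cbasic V, U x, V y
  & forall z, U z -> V z -> False].

Lemma csep_sym x y : csep x y -> csep y x.
Proof. by move=> [U [V [? ? ? ? H]]]; exists V, U; split => // z ? ?; apply: (H z). Qed.

Let R := Rdefinitions.R.

Lemma star_basic (x : cV C) (eps : R) : 0 < eps < 1 -> cbasic (open_star x eps).
Proof. by move=> h; left; exists x, eps. Qed.

Lemma int_basic (e : cE C) (a b : R) : 0 <= a -> a < b -> b <= 1 ->
  cbasic (edge_interval e a b).
Proof. by move=> *; right; exists e, a, b. Qed.

Lemma csep_VV (a b : cV C) : a <> b -> csep (CV a) (CV b).
Proof.
move=> ab; exists (open_star a (1/2)), (open_star b (1/2)); split.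
- by apply: star_basic; lra.
- by apply: star_basic; lra.
- by [].
- by [].
case=> [z /= -> //|e t ht /=].
case=> [][h1 h2] [][h3 h4]; try (by apply: ab; rewrite -h1 -h3); clear h1 h3 ab; lra.
Qed.

Lemma csep_VE (a : cV C) e t (ht : 0 < t < 1) : csep (CV a) (CE e ht).
Proof.
have [t0 t1] := andP ht.
pose eps := Order.min t (1 - t) / 2.
have hm1 : Order.min t (1 - t) <= t by rewrite ge_min lexx.
have hm2 : Order.min t (1 - t) <= 1 - t by rewrite ge_min lexx orbT.
have hm0 : 0 < Order.min t (1 - t) by rewrite lt_min t0 /=; lra.
exists (open_star a eps), (edge_interval e eps (1 - eps)); split.
- by apply: star_basic; rewrite /eps; apply/andP; split; lra.
- by apply: int_basic; rewrite /eps; lra.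
- by [].
- by rewrite /= /eps; split => //; apply/andP; split; lra.
case=> [z //|e' s hs /=] [][_ h] [_ /andP[h1 h2]]; lra.
Qed.

Lemma csep_EE e t (ht : 0 < t < 1) e' t' (ht' : 0 < t' < 1) :
  CE e ht <> CE e' ht' -> csep (CE e ht) (CE e' ht').
Proof.
move=> ne.
have [ee'|ee'] := pselect (e = e'); last first.
  exists (edge_interval e 0 1), (edge_interval e' 0 1); split.
  - by apply: int_basic; lra.
  - by apply: int_basic; lra.
  - by split.
  - by split.
  by case=> [z //|f s hs /=] [-> _] [? _].
subst e'.
have [? ?] := andP ht; have [? ?] := andP ht'.
have tt' : t <> t'.
  move=> tt'; subst t'; apply: ne; congr CE; exact: Prop_irrelevance.
have [lt|gt] : t < t' \/ t' < t.
  by case: (ltgtP t t') => h; [left|right|exfalso; exact: tt' h].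
- exists (edge_interval e 0 ((t + t') / 2)), (edge_interval e ((t + t') / 2) 1);
    split.
  + by apply: int_basic; lra.
  + by apply: int_basic; lra.
  + by split => //; apply/andP; split; lra.
  + by split => //; apply/andP; split; lra.
  by case=> [z //|f s hs /=] [_ /andP[? ?]] [_ /andP[? ?]]; lra.
- exists (edge_interval e ((t + t') / 2) 1), (edge_interval e 0 ((t + t') / 2));
    split.
  + by apply: int_basic; lra.
  + by apply: int_basic; lra.
  + by split => //; apply/andP; split; lra.
  + by split => //; apply/andP; split; lra.
  by case=> [z //|f s hs /=] [_ /andP[? ?]] [_ /andP[? ?]]; lra.
Qed.

Lemma csep_all (x y : cpoint C) : x <> y -> csep x y.
Proof.
case: x => [a|e t ht]; case: y => [b|e' t' ht'] ne.
- by apply: csep_VV => ab; apply: ne; rewrite ab.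
- exact: csep_VE.
- exact/csep_sym/csep_VE.
- exact: csep_EE.
Qed.

Lemma chausdorff : hausdorff_space (cpoint C).
Proof.
move=> p q; apply: contraPP => ne.
have [U [V [cU cV Up Vq H]]] := csep_all ne.
rewrite /cluster /= => /(_ U V).
have nU : nbhs p U by apply: open_nbhs_nbhs; split => //; apply: cbasic_open.
have nV : nbhs q V by apply: open_nbhs_nbhs; split => //; apply: cbasic_open.
by case/(_ nU nV) => z [Uz Vz]; apply: (H z).
Qed.

Lemma finite_bigcup_compact (X : topologicalType) (I : Type) (A : set I)
  (F : I -> set X) : finite_set A -> (forall i, A i -> compact (F i)) ->
  compact (\bigcup_(i in A) F i).
Proof.
move=> fA cF.
have := @bigsetU_fset_set X {classic I} A F fA => <-.
rewrite big_seq_cond; apply: bigsetU_compact => i /andP[+ _]; rewrite in_fset_set // => /set_mem; exact: cF.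
Qed.

Definition gpath (e : cE C) (s : R) : cpoint C :=
  match pselect (0 < s < 1) with
  | left h => CE e h
  | right _ => if s <= 0 then CV (csrc e) else CV (ctgt e)
  end.

Lemma gpath_in e s (h : 0 < s < 1) : gpath e s = CE e h.
Proof.
rewrite /gpath; case: pselect => [h'|//]; congr CE; exact: Prop_irrelevance.
Qed.

Lemma gpath_0 e s : s <= 0 -> gpath e s = CV (csrc e).
Proof.
move=> s0; rewrite /gpath; case: pselect => [h|_]; last by rewrite s0.
by exfalso; move/andP: h => [h _]; move: s0; rewrite leNgt h.
Qed.

Lemma gpath_1 e s : 1 <= s -> gpath e s = CV (ctgt e).
Proof.
move=> s1; rewrite /gpath; case: pselect => [h|_].
  by exfalso; move/andP: h => [_ h]; move: s1; rewrite leNgt h.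
by rewrite ifF //; apply/negbTE; rewrite -ltNge; apply: lt_le_trans s1.
Qed.

Lemma gpath_cases e s :
  (exists h : 0 < s < 1, gpath e s = CE e h) \/
  (s <= 0 /\ gpath e s = CV (csrc e)) \/ (1 <= s /\ gpath e s = CV (ctgt e)).
Proof.
have [s0|s0] := pselect (s <= 0); first by right; left; split => //; exact: gpath_0.
have [s1|s1] := pselect (1 <= s); first by right; right; split => //; exact: gpath_1.
have h : 0 < s < 1 by rewrite !ltNge; apply/andP; split; apply/negP.
by left; exists h; exact: gpath_in.
Qed.

Lemma gpath_cont e : {within `[0, 1], continuous (gpath e)}.
Proof.
apply/subspace_continuousP => x Ax; apply: cnbhs_sub => B cB Bx.
have [x0 x1] : 0 <= x /\ x <= 1.
  by move: Ax; rewrite /= in_itv /= => /andP.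
rewrite /= nbhs_simpl /=; rewrite /from_subspace in Bx *; rewrite /within /= nbhs_simpl.
case: cB => [[v [eps [/andP[e0 e1] BE]]]|[e' [a [b [a0 [ab [b1 BE]]]]]]]; subst B.
- move: Bx; case: (gpath_cases e x) => [[h ->]|[[xl ->]|[xr ->]]] /=.
  + case=> [[sv xe]|[tv xe]].
    * near=> y => _.
      have ye : y < eps by near: y; exact: lt_nbhsl.
      have y0 : 0 < y by near: y; apply: lt_nbhsr; case/andP: h.
      have hy : 0 < y < 1 by rewrite y0 /=; apply: lt_trans ye e1.
      by rewrite /= (gpath_in e hy) /=; left.
    * near=> y => _.
      have ye : 1 - eps < y by near: y; exact: lt_nbhsr.
      have y1 : y < 1 by near: y; apply: lt_nbhsl; case/andP: h.
      have hy : 0 < y < 1 by rewrite y1 andbT; apply: le_lt_trans ye; lra.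
      by rewrite /= (gpath_in e hy) /=; right.
  + move=> sv; near=> y => Ay.
    have ye : y < eps by near: y; apply: lt_nbhsl; lra.
    case: (gpath_cases e y) => [[hy ->]|[[_ ->]|[y1 _]]] /=.
    * by left.
    * by [].
    * lra.
  + move=> tv; near=> y => Ay.
    have ye : 1 - eps < y by near: y; apply: lt_nbhsr; lra.
    case: (gpath_cases e y) => [[hy ->]|[[y0 _]|[_ ->]]] /=.
    * by right.
    * lra.
    * by [].
- move: Bx; case: (gpath_cases e x) => [[h ->]|[[_ ->]|[_ ->]]] //= [ee /andP[ax xb]].
  subst e'; near=> y => _.
  have ay : a < y by near: y; exact: lt_nbhsr.
  have yb : y < b by near: y; exact: lt_nbhsl.
  have hy : 0 < y < 1 by apply/andP; split; lra.
  by rewrite /= (gpath_in e hy) /=; split => //; rewrite ay yb.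
Unshelve. all: by end_near.
Qed.
Lemma ccompact : finite_set [set: cV C] -> finite_set [set: cE C] ->
  compact [set: cpoint C].
Proof.
move=> fV fE.
have -> : [set: cpoint C] =
    (@CV C @` setT) `|` \bigcup_(e in setT) (gpath e @` `[0, 1]).
  apply/seteqP; split => // -[v|e t h] _; first by left; exists v.
  right; exists e => //; exists t; last exact: gpath_in.
  by rewrite /= in_itv /=; case/andP: h => h1 h2; rewrite !ltW.
apply: compactU; first exact/finite_compact/finite_image.
apply: finite_bigcup_compact => // e _; apply: continuous_compact.
  exact: gpath_cont.
exact: segment_compact.
Qed.
End A.

Definition cellular (C1 C2 : cplx) (f : cpoint C1 -> cpoint C2) (fV : cV C1 -> cV C2) :=
  (forall v, f (CV v) = CV (fV v)) /\
  (forall e, (fV (csrc e) = fV (ctgt e) /\ forall t h, f (CE e (t:=t) h) = CV (fV (csrc e)))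
     \/ (exists l, [/\ csrc l = fV (csrc e), ctgt l = fV (ctgt e)
               & forall t h, f (CE e (t:=t) h) = CE l h])).

Lemma cell_cont (C1 C2 : cplx) (f : cpoint C1 -> cpoint C2) fV :
  cellular f fV -> continuous f.
Proof.
move=> [fv fe]; apply: cont_basic => x B cB Bx.
suff [B' [cB' B'x sB']] : exists B', [/\ cbasic B', B' x & forall y, B' y -> B (f y)].
  apply: (@filterS _ _ _ B'); first by move=> y /sB'.
  by apply: open_nbhs_nbhs; split => //; apply: cbasic_open.
case: cB Bx => [[q [eps [/andP[e0 e1] ->]]]|[l [a [b [a0 [ab [b1 ->]]]]]]].
- case: x => [v|e t h].
  + rewrite fv /= => vq; exists (open_star v eps); split => //.
      by apply: star_basic; rewrite e0 e1.
    case=> [w /= ->|e s hs /=]; first by rewrite fv.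
    case: (fe e) => [[eq fc]|[l [sl tl fc]]]; rewrite fc /=.
      by rewrite -vq; case=> [][ev _]; [rewrite ev|rewrite eq ev].
    by rewrite sl tl -vq; case=> [][-> ?]; [left|right].
  + case: (fe e) => [[eq fc]|[l [sl tl fc]]]; rewrite fc /=.
      move=> <-; exists (edge_interval e 0 1); split => //.
      * by apply: int_basic; lra.
      by case=> [//|e' s hs /=] [ee _]; subst e'; rewrite fc.
    case=> [][lq te].
    * exists (edge_interval e 0 eps); split.
      - by apply: int_basic; lra.
      - by split => //; case/andP: h => h0 _; rewrite h0 te.
      by case=> [//|e' s hs /=] [ee /andP[_ se]]; subst e'; rewrite fc /= lq; left.
    * exists (edge_interval e (1 - eps) 1); split.
      - by apply: int_basic; lra.
      - by split => //; case/andP: h => _ h1; rewrite h1 te.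
      by case=> [//|e' s hs /=] [ee /andP[se _]]; subst e'; rewrite fc /= lq; right.
- case: x => [v|e t h]; first by rewrite fv.
  case: (fe e) => [[eq fc]|[l' [sl tl fc]]]; rewrite fc //= => -[ll /andP[hat htb]].
  subst l'; exists (edge_interval e a b); split.
  - by apply: int_basic.
  - by split => //; rewrite hat htb.
  by case=> [//|e' s hs /=] [ee /andP[has hsb]]; subst e'; rewrite fc /=; rewrite has hsb.
Qed.

Lemma closed_equalizer (T U : topologicalType) (f g : T -> U) :
  hausdorff_space U -> continuous f -> continuous g -> closed [set x | f x = g x].
Proof.
move=> hU cf cg x clx; apply: hU => A B nA nB.
have : nbhs x (f @^-1` A `&` g @^-1` B).
  by apply: filterI; [exact: cf | exact: cg].
case/clx => y [/= fyg [Ay By]]; by exists (f y); split => //; rewrite fyg.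
Qed.

Lemma prod_cvg (I : Type) (K : I -> topologicalType)
  (F : set_system (prod_topology K)) (x : prod_topology K) :
  Filter F -> (forall i, (fun f : prod_topology K => f i) @ F --> x i) -> F --> x.
Proof.
move=> FF H; apply/cvg_sup => i A /=.
case=> B [[C oC <-] Bx sBA].
rewrite nbhs_filterE; apply: (filterS sBA).
have := H i C; rewrite /= nbhs_simpl; apply.
by apply: open_nbhs_nbhs; split.
Qed.

Lemma finite_sig (T : Type) (Pr : T -> Prop) (L : set T) :
  finite_set L -> (forall x, Pr x -> L x) -> finite_set [set: {x | Pr x}].
Proof.
move=> fL sub.
have [[d _]|nd] := pselect (exists d : {x | Pr x}, True); last first.
  suff -> : [set: {x | Pr x}] = set0 by exact: finite_set0.
  by apply/seteqP; split => // y _; apply: nd; exists y.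
pose f x := match pselect (Pr x) with left h => exist Pr x h | right _ => d end.
apply: (@sub_finite_set _ _ (f @` L)); last exact: finite_image.
case=> x h _; exists x; first exact: sub.
rewrite /f; case: pselect => [h'|//]; congr exist; exact: Prop_irrelevance.
Qed.


Section B.
Variable D : digraph.
Local Notation V := (dvert D).

Lemma qv_eq (P : adm_part D) (a b : qvert P) : sval a = sval b -> a = b.
Proof.
by case: a b => [a ha] [b hb] /= ab; subst b; congr exist; exact: Prop_irrelevance.
Qed.

Lemma qe_eq (P : adm_part D) (a b : qedge P) : sval a = sval b -> a = b.
Proof.
by case: a b => [a ha] [b hb] /= ab; subst b; congr exist; exact: Prop_irrelevance.
Qed.

Lemma part_fin (P : adm_part D) : finite_set (sval P).
Proof. by case: P => P [[]]. Qed.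

Lemma part_ne (P : adm_part D) p : sval P p -> p !=set0.
Proof. by case: P => P [[]] /= ? H *; apply: H. Qed.

Lemma part_dis (P : adm_part D) p q : sval P p -> sval P q -> p `&` q !=set0 -> p = q.
Proof. by case: P => P [[]] /= ? ? H *; apply: H. Qed.

Lemma part_sep (P : adm_part D) p q : sval P p -> sval P q -> p <> q ->
  exists Y : set V, finite_set Y /\ separates Y p q.
Proof. by case: P => P [_ H] /=; apply: H. Qed.

Lemma cls_in (P : adm_part D) v : sval (cls P v) v.
Proof. by rewrite /cls; case: cid2. Qed.

Lemma cls_uniq (P : adm_part D) (q : qvert P) v : sval q v -> q = cls P v.
Proof.
move=> qv; apply: qv_eq; apply: part_dis; [exact: proj2_sig q|exact: proj2_sig (cls P v)|].
by exists v; split => //; exact: cls_in.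
Qed.

Lemma cls_eqP (P : adm_part D) u v : cls P u = cls P v <-> sval (cls P u) v.
Proof.
split => [->|h]; first exact: cls_in.
by rewrite (cls_uniq h).
Qed.

Lemma cls_sval_neq (P : adm_part D) u v :
  cls P u <> cls P v -> sval (cls P u) <> sval (cls P v).
Proof. by move=> ne h; apply: ne; apply: qv_eq. Qed.

Lemma qcopy_valid (P : adm_part D) u w : dedge u w -> cls P u <> cls P w ->
  (qvalid P (QCopy u w) <->
   finite_set (edges_between (sval (cls P u)) (sval (cls P w)))).
Proof.
move=> uw ne; split; first by case.
by move=> f; split => //; apply: cls_sval_neq.
Qed.

Lemma qquot_valid (P : adm_part D) u w : cls P u <> cls P w ->
  (qvalid P (QQuot (sval (cls P u)) (sval (cls P w))) <->
   ~ finite_set (edges_between (sval (cls P u)) (sval (cls P w)))).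
Proof.
move=> ne; split; first by case.
move=> f; split => //; try exact: proj2_sig.
exact: cls_sval_neq.
Qed.

Lemma edges_between_sub (p1 p2 q1 q2 : set V) : p1 `<=` q1 -> p2 `<=` q2 ->
  edges_between p1 p2 `<=` edges_between q1 q2.
Proof. by move=> s1 s2 [u v] /= [? [? ?]]; split => //; split; [apply: s1|apply: s2]. Qed.

Lemma phi_shape (P : adm_part D) (e : dedges D) :
  (cls P (sval e).1 = cls P (sval e).2 /\
    forall t (h : 0 < t < 1), phi P (@CE (dcplx D) e t h) = @CV (qcplx P) (cls P (sval e).1)) \/
  (cls P (sval e).1 <> cls P (sval e).2 /\ exists l : qedge P,
    [/\ qsrc l = cls P (sval e).1, qtgt l = cls P (sval e).2,
     (qvalid P (QCopy (sval e).1 (sval e).2) -> sval l = QCopy (sval e).1 (sval e).2),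
     (~ qvalid P (QCopy (sval e).1 (sval e).2) ->
        sval l = QQuot (sval (cls P (sval e).1)) (sval (cls P (sval e).2)))
    & forall t (h : 0 < t < 1), phi P (@CE (dcplx D) e t h) = @CE (qcplx P) l t h]).
Proof.
have uw : dedge (sval e).1 (sval e).2 := proj2_sig e.
case: (pselect (cls P (sval e).1 = cls P (sval e).2)) => [eq|ne].
  left; split => // t h; rewrite /phi; case: pselect => // /(_ eq) [].
right; split => //.
case: (pselect (qvalid P (QCopy (sval e).1 (sval e).2))) => [hc|nc].
  exists (exist _ _ hc); split => // t h.
  rewrite /phi; case: pselect => [/ne[]|_]; case: pselect => [hc'|/(_ hc)[]].
  by rewrite (Prop_irrelevance hc' hc).
have hq : qvalid P (QQuot (sval (cls P (sval e).1)) (sval (cls P (sval e).2))).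
  by apply/qquot_valid => // f; apply: nc; exact/qcopy_valid.
exists (exist _ _ hq); split => //; try exact: qv_eq.
move=> t h; rewrite /phi; case: pselect => [/ne[]|_]; case: pselect => [/nc[]|_].
case: pselect => [hq'|/(_ hq)[]].
by rewrite (Prop_irrelevance hq' hq).
Qed.

Lemma phi_cellular (P : adm_part D) :
  cellular (C1 := dcplx D) (C2 := qcplx P) (phi P) (cls P).
Proof.
split => // e.
case: (phi_shape P e) => [[eq H]|[ne [l [sl tl _ _ H]]]]; [left|right]; first by split.
by exists l; split.
Qed.

Lemma phi_cont (P : adm_part D) : continuous (phi P).
Proof. exact: (cell_cont (phi_cellular P)). Qed.
Section Up.
Variables (P P' : adm_part D) (hle : part_le P P').

Lemma up_sup (p' : qvert P') : sval p' `<=` sval (up hle p').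
Proof. by rewrite /up; case: cid2. Qed.

Lemma up_mem (p' : qvert P') v : sval p' v -> up hle p' = cls P v.
Proof. by move=> h; apply: cls_uniq; exact: up_sup. Qed.

Lemma up_cls v : up hle (cls P' v) = cls P v.
Proof. by apply: up_mem; exact: cls_in. Qed.

Lemma bond_shape (l' : qedge P') :
  (up hle (qsrc l') = up hle (qtgt l') /\ forall t (h : 0 < t < 1),
     bond hle (@CE (qcplx P') l' t h) = @CV (qcplx P) (up hle (qsrc l'))) \/
  (up hle (qsrc l') <> up hle (qtgt l') /\
   exists l : qedge P, [/\ qsrc l = up hle (qsrc l'), qtgt l = up hle (qtgt l'),
     (qvalid P (QQuot (sval (up hle (qsrc l'))) (sval (up hle (qtgt l')))) ->
        sval l = QQuot (sval (up hle (qsrc l'))) (sval (up hle (qtgt l')))),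
     (~ qvalid P (QQuot (sval (up hle (qsrc l'))) (sval (up hle (qtgt l')))) ->
        sval l = sval l')
     & forall t (h : 0 < t < 1), bond hle (@CE (qcplx P') l' t h) = @CE (qcplx P) l t h]).
Proof.
case: (pselect (up hle (qsrc l') = up hle (qtgt l'))) => [eq|ne].
  left; split => // t h; rewrite /bond; case: pselect => // /(_ eq) [].
right; split => //.
case: (pselect (qvalid P (QQuot (sval (up hle (qsrc l'))) (sval (up hle (qtgt l')))))) => [hq|nq].
  exists (exist _ _ hq); split; try exact: qv_eq; try by []; try by move=> /(_ hq).
  move=> t h; rewrite /bond; case: pselect => [/ne[]|_]; case: pselect => [hq'|/(_ hq)[]].
  by rewrite (Prop_irrelevance hq' hq).
case: l' ne nq => [[u v|p1 p2] hl] ne nq.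
- have [uv _ _] := hl.
  have E1 : up hle (qsrc (exist _ (QCopy u v) hl)) = cls P u by rewrite /= up_cls.
  have E2 : up hle (qtgt (exist _ (QCopy u v) hl)) = cls P v by rewrite /= up_cls.
  have nq0 := nq; rewrite E1 E2 in ne nq.
  have hc : qvalid P (QCopy u v).
    apply/qcopy_valid => //; apply: contrapT => f; apply: nq.
    exact: (proj2 (qquot_valid ne) f).
  exists (exist _ _ hc); split; [by rewrite E1|by rewrite E2|by move/nq0|by []|].
  move=> t h; rewrite /bond.
  case: pselect => [e|_]; first by exfalso; rewrite E1 E2 in e; exact: ne e.
  case: pselect => [hq'|_]; first by exfalso; move: hq'; rewrite E1 E2; exact: nq.
  rewrite /=; case: pselect => [hc'|/(_ hc)[]].
  by rewrite (Prop_irrelevance hc' hc).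
- exfalso; apply: nq; have [hp1 hp2 _ inf] := hl.
  split; try exact: proj2_sig.
    by move=> h; apply: ne; apply: qv_eq.
  move=> f; apply: inf; apply: sub_finite_set f.
  by apply: edges_between_sub => x hx; apply: up_sup.
Qed.

Lemma bond_cellular : cellular (C1 := qcplx P') (C2 := qcplx P) (bond hle) (up hle).
Proof.
split => // l'.
case: (bond_shape l') => [[eq H]|[_ [l [sl tl _ _ H]]]]; [left|right]; first by split.
by exists l; split.
Qed.

Lemma bond_cont : continuous (bond hle).
Proof. exact: (cell_cont bond_cellular). Qed.

Lemma compat (z : dspace D) : bond hle (phi P' z) = phi P z.
Proof.
case: z => [v|e t h]; first by rewrite /= up_cls.
have uw : dedge (sval e).1 (sval e).2 := proj2_sig e.
case: (phi_shape P' e) => [[eq' H']|[ne' [l' [sl' tl' c' q' H']]]]; rewrite H'.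
- have eq : cls P (sval e).1 = cls P (sval e).2.
    by rewrite -[cls P (sval e).1]up_cls -[cls P (sval e).2]up_cls eq'.
  case: (phi_shape P e) => [[_ H]|[ne _]]; last by exfalso; exact: ne eq.
  by rewrite H /= up_cls.
case: (bond_shape l') => [[eqb Hb]|[neb [l [sl tl cq cn Hb]]]]; rewrite Hb.
  rewrite sl' tl' !up_cls in eqb.
  case: (phi_shape P e) => [[_ H]|[ne _]]; last by exfalso; exact: ne eqb.
  by rewrite H sl' up_cls.
rewrite sl' tl' !up_cls in neb cq cn.
case: (phi_shape P e) => [[eq _]|[ne [l'' [_ _ c q H]]]]; first by exfalso; exact: neb eq.
rewrite H; have -> : l = l''; last by [].
apply: qe_eq.
case: (pselect (qvalid P (QQuot (sval (cls P (sval e).1)) (sval (cls P (sval e).2))))) => [hq|nq].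
  rewrite (cq hq) q //.
  by move=> hc; apply: (proj1 (qquot_valid ne) hq); exact: (proj1 (qcopy_valid uw ne) hc).
have fin : finite_set (edges_between (sval (cls P (sval e).1)) (sval (cls P (sval e).2))).
  by apply: contrapT => inf; apply: nq; exact: (proj2 (qquot_valid ne) inf).
rewrite (cn nq) (c (proj2 (qcopy_valid uw ne) fin)).
case: (pselect (qvalid P' (QCopy (sval e).1 (sval e).2))) => [hc'|nc']; first exact: c'.
exfalso; apply: nc'; apply/(qcopy_valid uw ne'); apply: sub_finite_set fin.
by apply: edges_between_sub => x hx;
  [rewrite -(up_cls (sval e).1) | rewrite -(up_cls (sval e).2)]; exact: up_sup.
Qed.
End Up.
Lemma phi_surj (P : adm_part D) (x : qspace P) : exists z, phi P z = x.
Proof.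
case: x => [q|l t h].
  have [v qv] := part_ne (proj2_sig q).
  by exists (@CV (dcplx D) v); rewrite /= -(cls_uniq qv).
case: l => [[u w|p1 p2] hl].
- have [uw nuw fin] := hl.
  pose e : dedges D := exist _ (u, w) uw.
  exists (@CE (dcplx D) e t h).
  case: (phi_shape P e) => [[eq _]|[ne [l'' [_ _ c _ H]]]].
    by exfalso; apply: nuw; rewrite eq.
  rewrite H; have -> // : l'' = exist _ _ hl.
  by apply: qe_eq; rewrite c.
- have [hp1 hp2 n12 inf] := hl.
  have [[u w] /= [uw [p1u p2w]]] := infinite_setN0 inf.
  pose e : dedges D := exist _ (u, w) uw.
  have E1 : p1 = sval (cls P u) by rewrite -(cls_uniq (q := exist _ p1 hp1) p1u).
  have E2 : p2 = sval (cls P w) by rewrite -(cls_uniq (q := exist _ p2 hp2) p2w).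
  exists (@CE (dcplx D) e t h).
  case: (phi_shape P e) => [[eq _]|[ne [l'' [_ _ _ q H]]]].
    by exfalso; apply: n12; rewrite E1 E2; exact: (f_equal sval eq).
  rewrite H; have -> // : l'' = exist _ _ hl.
  apply: qe_eq; rewrite q.
    have -> : sval (exist (qvalid P) (QQuot p1 p2) hl) = QQuot p1 p2 by [].
    by rewrite E1 E2.
  by move=> [_ _ fin]; apply: inf; rewrite E1 E2; exact: fin.
Qed.
Lemma part_cov (P : adm_part D) v : exists2 p, sval P p & p v.
Proof. by case: P => P [[]] /=. Qed.

Lemma sep_mono (Y A B A' B' : set V) : separates Y A B -> A' `<=` A -> B' `<=` B ->
  separates Y A' B'.
Proof.
move=> [H|H] sA sB; [left|right] => a s ha w hb; apply: H => //; by [apply: sA|apply: sB].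
Qed.

Definition PSset (S : set V) : set (set V) :=
  [set p | (exists2 x, S x & p = [set x]) \/ (p = ~` S /\ ~` S !=set0)].

Lemma PS_adm S : finite_set S -> admissible (PSset S).
Proof.
move=> fS; split; first split.
- apply: (@sub_finite_set _ _ (((fun x => [set x]) @` S) `|` [set ~` S])).
    by move=> p [[x Sx ->]|[-> _]]; [left; exists x|right].
  by rewrite finite_setU; split; [exact: finite_image|exact: finite_set1].
- by move=> p [[x _ ->]|[-> ne]]; [exists x|].
- move=> p q [[x Sx ->]|[-> _]] [[y Sy ->]|[-> _]] [z [pz qz]] //.
  + by rewrite -pz -qz.
  + by exfalso; apply: qz; rewrite pz.
  + by exfalso; apply: pz; rewrite qz.
- move=> v; case: (pselect (S v)) => [Sv|nSv].
    by exists [set v] => //; left; exists v.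
  by exists (~` S) => //; right; split => //; exists v.
- move=> p q [[x Sx ->]|[-> _]] hq ne.
    exists [set x]; split; first exact: finite_set1.
    by left => a s ax _ _; left.
  case: hq => [[y Sy qy]|[qe _]]; last by exfalso; apply: ne.
  subst q; exists [set y]; split; first exact: finite_set1.
  by right => a s ay _ _; left.
Qed.

Definition PS (S : set V) (fS : finite_set S) : adm_part D := exist _ _ (PS_adm fS).

Lemma PS_cls S (fS : finite_set S) x : S x -> sval (cls (PS fS) x) = [set x].
Proof.
move=> Sx; case: (cls (PS fS) x) (cls_in (PS fS) x) => p hp /= px.
case: hp => [[y Sy py]|[pe _]]; last by exfalso; rewrite pe in px.
by subst p; rewrite px.
Qed.

Lemma PS_single S (fS : finite_set S) x v : S x -> cls (PS fS) v = cls (PS fS) x -> v = x.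
Proof.
by move=> Sx E; have := cls_in (PS fS) v; rewrite E PS_cls.
Qed.

Definition Mset (P1 P2 : adm_part D) : set (set V) :=
  [set p | exists p1 p2, [/\ sval P1 p1, sval P2 p2, p = p1 `&` p2 & p !=set0]].

Lemma M_adm (P1 P2 : adm_part D) : admissible (Mset P1 P2).
Proof.
split; first split.
- apply: (@sub_finite_set _ _ [set a `&` b | a in sval P1 & b in sval P2]).
    by move=> p [a [b [ha hb -> _]]]; exists a => //; exists b.
  by apply: finite_image2; apply: part_fin.
- by move=> p [a [b [_ _ _ ?]]].
- move=> p q [a [b [ha hb -> _]]] [c [d [hc hd -> _]]] [z [[az bz] [cz dz]]].
  have ac : a = c by apply: (part_dis ha hc); exists z.
  have bd : b = d by apply: (part_dis hb hd); exists z.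
  by rewrite ac bd.
- move=> v; have [a ha av] := part_cov P1 v; have [b hb bv] := part_cov P2 v.
  by exists (a `&` b); [exists a, b; split => //; exists v|].
- move=> p q [a [b [ha hb -> _]]] [c [d [hc hd -> _]]] ne.
  case: (pselect (a = c)) => [ac|ac].
    have bd : b <> d by move=> bd; apply: ne; rewrite ac bd.
    have [Y [fY sY]] := part_sep hb hd bd.
    by exists Y; split => //; apply: (sep_mono sY); apply: subIsetr.
  have [Y [fY sY]] := part_sep ha hc ac.
  by exists Y; split => //; apply: (sep_mono sY); apply: subIsetl.
Qed.

Definition M (P1 P2 : adm_part D) : adm_part D := exist _ _ (M_adm P1 P2).

Lemma M_le1 (P1 P2 : adm_part D) : part_le P1 (M P1 P2).
Proof. by move=> p' [a [b [ha hb -> _]]]; exists a => //; apply: subIsetl. Qed.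

Lemma M_le2 (P1 P2 : adm_part D) : part_le P2 (M P1 P2).
Proof. by move=> p' [a [b [ha hb -> _]]]; exists b => //; apply: subIsetr. Qed.
Lemma de_eq (a b : dedges D) : sval a = sval b -> a = b.
Proof.
by case: a b => [a ha] [b hb] /= ab; subst b; congr exist; exact: Prop_irrelevance.
Qed.

Lemma qvert_fin (P : adm_part D) : finite_set [set: qvert P].
Proof. apply: (finite_sig (part_fin P)) => //. Qed.

Lemma qedge_fin (P : adm_part D) : finite_set [set: qedge P].
Proof.
pose I := (sval P `*` sval P) `&` [set pq | finite_set (edges_between pq.1 pq.2)].
apply: (@finite_sig _ _ (((fun uv => QCopy uv.1 uv.2) @`
    (\bigcup_(pq in I) edges_between pq.1 pq.2)) `|`
    ((fun pq => QQuot pq.1 pq.2) @` (sval P `*` sval P)))).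
  rewrite finite_setU; split; apply: finite_image; last first.
    by apply: finite_setX; apply: part_fin.
  apply: bigcup_finite; first by apply: finite_setIl; apply: finite_setX; apply: part_fin.
  by move=> pq [].
case=> [u w|p1 p2].
  move=> [uw ne fin]; left; exists (u, w) => //.
  exists (sval (cls P u), sval (cls P w)).
    by split => //; split; exact: proj2_sig.
  by split => //; split; exact: cls_in.
by move=> [hp1 hp2 _ _]; right; exists (p1, p2).
Qed.

Lemma basic_sep (z : dspace D) (B : set (dspace D)) : cbasic B -> B z ->
  exists P (W : set (qspace P)), [/\ open W, W (phi P z) & forall y, W (phi P y) -> B y].
Proof.
case => [[x [eps [/andP[e0 e1] ->]]]|[e0 [a [b [a0 [ab [b1 ->]]]]]]] Bz.
- have fS := finite_set1 x.
  have Sx : [set x] x by [].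
  exists (PS fS), (@open_star (qcplx (PS fS)) (cls (PS fS) x) eps); split.
  + by apply: cbasic_open; apply: star_basic; rewrite e0 e1.
  + case: z Bz => [v /= ->|e t h] //.
    case: (phi_shape (PS fS) e) => [[eq H]|[ne [l [sl tl _ _ H]]]]; rewrite H /=.
      by case=> [][ex _]; [rewrite ex|rewrite eq ex].
    by rewrite sl tl; case=> [][-> ?]; [left|right].
  + case=> [v /= E|e t h]; first exact: (PS_single Sx E).
    case: (phi_shape (PS fS) e) => [[eq H]|[ne [l [sl tl _ _ H]]]]; rewrite H /=.
      move=> E; exfalso; apply: (@dedge_irr D x).
      have E1 := PS_single Sx E.
      have E2 : (sval e).2 = x by apply: (PS_single Sx); rewrite -eq.
      by have := proj2_sig e; rewrite E1 E2.
    rewrite sl tl; case=> [][E ?].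
      by left; split => //; apply: (PS_single Sx).
    by right; split => //; apply: (PS_single Sx).
- case: z Bz => [//|e t h] [ee /andP[hat htb]]; subst e0.
  have fS := finite_set2 (sval e).1 (sval e).2.
  have S1 : [set (sval e).1; (sval e).2] (sval e).1 by left.
  have S2 : [set (sval e).1; (sval e).2] (sval e).2 by right.
  case: (phi_shape (PS fS) e) => [[eq H]|[ne [l [sl tl _ _ H]]]].
    exfalso; apply: (@dedge_irr D (sval e).2).
    by have := proj2_sig e; rewrite (PS_single S2 eq).
  exists (PS fS), (@edge_interval (qcplx (PS fS)) l a b); split.
  + by apply: cbasic_open; apply: int_basic.
  + by rewrite H /=; split => //; rewrite hat htb.
  case=> [//|e' s hs].
  case: (phi_shape (PS fS) e') => [[eq' H']|[ne' [l' [sl' tl' _ _ H']]]]; rewrite H' //=.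
  case=> ll /andP[has hsb]; subst l'.
  split; last by rewrite has hsb.
  have E1 : (sval e').1 = (sval e).1 by apply: (PS_single S1); rewrite -sl -sl'.
  have E2 : (sval e').2 = (sval e).2 by apply: (PS_single S2); rewrite -tl -tl'.
  by apply: de_eq; rewrite [sval e']surjective_pairing [sval e]surjective_pairing E1 E2.
Qed.
End B.


HB.instance Definition _ (D : digraph) := gen_eqMixin (adm_part D).
HB.instance Definition _ (D : digraph) := gen_choiceMixin (adm_part D).

Section Main.
Variable D : digraph.

Lemma eval_cont (P : adm_part D) : continuous (fun f : qprod D => f P).
Proof. exact: (@proj_continuous (adm_part D) (@qspace D) P). Qed.

Lemma Phi_inv (z : dspace D) : invlim D (Phi D z).
Proof. by move=> P P' h; exact: compat. Qed.

Lemma Phi_cont : continuous (Phi D).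
Proof.
move=> z; apply: prod_cvg; first by apply: fmap_filter; apply: nbhs_filter.
move=> P.
move=> A nA; exact: (@phi_cont D P z _ nA).
Qed.

Lemma Phi_inj : injective (Phi D).
Proof.
move=> z z' E; apply: contrapT => ne.
have [U [V' [cU cV Uz Vz' H]]] := csep_all ne.
have [P [W [oW Wz sW]]] := basic_sep cU Uz.
apply: (H z') => //; apply: sW.
have -> : phi P z' = Phi D z' P by [].
by rewrite -E.
Qed.

Lemma Phi_loc (z : dspace D) (U : set (dspace D)) : nbhs z U ->
  exists W : set (qprod D), [/\ open W, W (Phi D z) & forall y, W (Phi D y) -> U y].
Proof.
pose Hf := [set A : set (dspace D) | exists W : set (qprod D),
  [/\ open W, W (Phi D z) & forall y, W (Phi D y) -> A y]].
have FH : Filter Hf.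
  constructor.
  - by exists setT; split => //; exact: openT.
  - move=> A B [W1 [ho1 w1 s1]] [W2 [ho2 w2 s2]]; exists (W1 `&` W2); split.
    + exact: openI.
    + by split.
    + by move=> y [h1 h2]; split; [exact: s1|exact: s2].
  - by move=> A B AB [W [oW wW sW]]; exists W; split => // y /sW /AB.
apply: (cnbhs_sub FH) => B cB Bz.
have [P [W0 [oW0 W0z sW0]]] := basic_sep cB Bz.
exists ((fun f : qprod D => f P) @^-1` W0); split => //.
apply: open_comp => // f _; exact: eval_cont.
Qed.

Lemma Phi_emb (U : set (dspace D)) : open U ->
  exists2 W : set (qprod D), open W & (Phi D) @` U = W `&` range (Phi D).
Proof.
move=> oU.
exists (\bigcup_(W in [set W : set (qprod D) | open W /\ forall y, W (Phi D y) -> U y]) W).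
  by apply: bigcup_open => W [hW _].
rewrite eqEsubset; split.
  move=> p [z Uz <-]; split; last by exists z.
  have [W [oW Wz sW]] := Phi_loc (open_nbhs_nbhs (conj oU Uz)).
  by exists W.
by move=> p [[W [oW sW] Wp] [y _ E]]; exists y => //; apply: sW; rewrite E.
Qed.
Lemma Phi_dense : invlim D `<=` closure (range (Phi D)).
Proof.
move=> x ix W nW.
pose G := [set W : set (qprod D) | exists P (V0 : set (qspace P)),
  nbhs (x P) V0 /\ forall z, V0 (phi P z) -> W (Phi D z)].
have FG : Filter G.
  constructor.
  - exists (PS (finite_set0 (dvert D))), setT; split => //; exact: filterT.
  - move=> A B [P1 [V1 [n1 s1]]] [P2 [V2 [n2 s2]]].
    exists (M P1 P2), (bond (@M_le1 D P1 P2) @^-1` V1 `&` bond (@M_le2 D P1 P2) @^-1` V2).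
    split.
      apply: filterI.
        apply: (@bond_cont D P1 (M P1 P2) (@M_le1 D P1 P2) (x (M P1 P2))).
        by rewrite (ix P1 (M P1 P2) (@M_le1 D P1 P2)).
      apply: (@bond_cont D P2 (M P1 P2) (@M_le2 D P1 P2) (x (M P1 P2))).
      by rewrite (ix P2 (M P1 P2) (@M_le2 D P1 P2)).
    move=> z [/= h1 h2]; split; [apply: s1|apply: s2].
      by rewrite -(compat (@M_le1 D P1 P2)).
    by rewrite -(compat (@M_le2 D P1 P2)).
  - by move=> A B AB [P [V0 [n0 s0]]]; exists P, V0; split => // z /s0 /AB.
have xG : nbhs x `<=` G.
  apply: (prod_cvg FG) => P U nU.
  by exists P, U; split.
have [P [V0 [n0 s0]]] := xG W nW.
have [z hz] := phi_surj (x P).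
exists (Phi D z); split; first by exists z.
by apply: s0; rewrite hz; exact: nbhs_singleton.
Qed.

Lemma invlim_haus : hausdorff_space (subspace (invlim D)).
Proof.
apply: subspace_hausdorff.
apply: (@hausdorff_product (adm_part D) (@qspace D)) => P.
exact: chausdorff.
Qed.

Lemma invlim_closed : closed (invlim D).
Proof.
move=> x clx P P' h.
have C := @closed_equalizer (qprod D) (qspace P) (fun y => bond h (y P')) (fun y => y P)
  (@chausdorff _).
apply: C.
- move=> y; apply: (@continuous_comp _ _ _ (fun f : qprod D => f P') (bond h)).
    exact: eval_cont.
  exact: bond_cont.
- exact: eval_cont.
apply: (closureS _ clx) => y iy; exact: iy.
Qed.

Lemma invlim_compact : compact (invlim D).
Proof.
apply: (@subclosed_compact _ _ setT); [exact: invlim_closed| |by []].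
have := @tychonoff (adm_part D) (@qspace D) (fun P => setT)
  (fun P => @ccompact (qcplx P) (qvert_fin P) (qedge_fin P)).
have -> : [set f : forall i : adm_part D, qspace i | forall i, setT (f i)] = setT.
  by apply: funext => f; apply: propext; split.
by [].
Qed.
End Main.

Local Close Scope ring_scope.
Unset Implicit Arguments.
Set Strict Implicit.

Theorem theorem4p1 (D : digraph) :
  (* the inverse limit is a compact Hausdorff space *)
  compact (invlim D) /\ hausdorff_space (subspace (invlim D)) /\
  (* Phi maps D into the inverse limit ... *)
  (forall z : dspace D, invlim D (Phi D z)) /\
  (* ... and is an embedding (a homeomorphism onto its image) ... *)
  (continuous (Phi D) /\ injective (Phi D) /\
   (forall U : set (dspace D), open U ->
      exists2 W : set (qprod D), open W & (Phi D) @` U = W `&` range (Phi D))) /\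
  (* ... with dense image in the inverse limit *)
  invlim D `<=` closure (range (Phi D)).
Proof.
split; first exact: invlim_compact.
split; first exact: invlim_haus.
split; first exact: Phi_inv.
split; last exact: Phi_dense.
split; first exact: Phi_cont.
split; first exact: Phi_inj.
exact: Phi_emb.
Qed.
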